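(* Let $S$ be a numerical semigroup with multiplicity $m(S) = 3$, and let its Apéry set with respect to $3$ be $\{0,a_1,a_2\}$, where for $i=1,2$, $a_i$ is the smallest element of $S$ with $a_i \equiv i \pmod{3}$. (a) If $|a_1-a_2|\leq 2$, then $\dim_{\mathrm{mat}} S=2$. (b) If $|a_1-a_2| > 2$, then $\dim_{\mathrm{mat}} S=3$.
   Context: $\mathbb{N} = \{0,1,2,\ldots\}$. A numerical semigroup is an additive subsemigroup of $\mathbb{N}$ containing $0$ with finite complement in $\mathbb{N}$; its multiplicity $m(S)$ is its smallest nonzero element. $\mathsf{M}_d(X)$ denotes the $d\times d$ matrices with entries in $X$. For $A \in \mathsf{M}_d(\mathbb{Q})$, $\mathcal{S}(A) = \{ n \in \mathbb{N} : A^n \in \mathsf{M}_d(\mathbb{Z})\}$. The matricial dimension $\dim_{\mathrm{mat}} S$ is the smallest $d$ such that $S = \mathcal{S}(A)$ for some $A \in \mathsf{M}_d(\mathbb{Q})$. *)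

(* Defs.v *)
From mathcomp Require Import all_boot all_order all_algebra.
Set Implicit Arguments. Unset Strict Implicit. Unset Printing Implicit Defensive.
Import Order.TTheory GRing.Theory Num.Theory.

Definition numerical_semigroup (S : nat -> Prop) : Prop :=
  [/\ S 0%N,
      (forall x y, S x -> S y -> S (x + y)%N) &
      exists N : nat, forall n, (N <= n)%N -> S n].

Definition multiplicity (S : nat -> Prop) (m : nat) : Prop :=
  [/\ (0 < m)%N, S m & forall k, (0 < k)%N -> (k < m)%N -> ~ S k].

Definition apery_elt (S : nat -> Prop) (m i a : nat) : Prop :=
  [/\ S a, a = i %[mod m] & forall b, S b -> b = i %[mod m] -> (a <= b)%N].

Definition int_mx (d : nat) (A : 'M[rat]_d) : Prop :=
  forall i j, A i j \is a Num.int.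

Definition SA (d : nat) (A : 'M[rat]_d) (n : nat) : Prop := int_mx (A ^+ n).

Definition realizable_in_dim (S : nat -> Prop) (d : nat) : Prop :=
  exists A : 'M[rat]_d, forall n, S n <-> SA A n.

Definition dim_mat_eq (S : nat -> Prop) (d : nat) : Prop :=
  realizable_in_dim S d /\ forall d', (d' < d)%N -> ~ realizable_in_dim S d'.

(* Main.v *)
Require Import Defs.
From mathcomp Require Import all_boot all_order all_algebra.
From mathcomp Require Import zify ring lra.
Set Implicit Arguments. Unset Strict Implicit. Unset Printing Implicit Defensive.
Import Order.TTheory GRing.Theory Num.Theory.
Local Open Scope ring_scope.

Lemma cubic_int (q : rat) (a b : int) :
  q ^+ 3 + a%:~R * q + b%:~R = 0 -> q \is a Num.int.
Proof.
move=> hq; rewrite Qint_def.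
set n := numq q; set m := denq q.
have hn : n%:~R = q * m%:~R :> rat by rewrite numqE.
have eq1 : n ^+ 3 + a * n * m ^+ 2 + b * m ^+ 3 = 0.
  have : ((n ^+ 3 + a * n * m ^+ 2 + b * m ^+ 3)%:~R : rat) = 0.
    rewrite !intrD !intrM hn.
    transitivity ((q ^+ 3 + a%:~R * q + b%:~R) * (m%:~R : rat) ^+ 3); first ring.
    by rewrite hq mul0r.
  by move/eqP; rewrite intr_eq0 => /eqP.
have dv : (m %| n ^+ 3)%Z.
  apply/dvdzP; exists (- (a * n * m + b * m ^+ 2)).
  by apply/eqP; rewrite -subr_eq0; apply/eqP; rewrite -[RHS]eq1; ring.
have cop : coprimez m (n ^+ 3).
  by rewrite coprimez_sym; apply: coprimezXl; rewrite coprimezE; exact: coprime_num_den.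
move: dv; rewrite -[n ^+ 3]mulr1 Gauss_dvdzr // => h; have := dvdz1 m; rewrite h => /esym h1.
have := denq_gt0 q; rewrite -/m; lia.
Qed.
Lemma int_lt1 (x : rat) : 0 < x -> x < 1 -> x \isn't a Num.int.
Proof.
move=> h0 h1; apply/negP => /intrP [z hz]; move: h0 h1; rewrite hz.
rewrite ltr0z => h0 h1.
have : (z%:~R : rat) < (1%:~R) by rewrite rmorph1.
rewrite ltr_int; lia.
Qed.

Lemma pow2_int (m k : nat) : ((2 : rat) ^+ m / 2 ^+ k \is a Num.int) = (k <= m)%N.
Proof.
case: (leqP k m) => hkm.
  by rewrite -(subnK hkm) exprD mulfK ?expf_neq0 // rpredX // intr_int.
apply: negbTE; apply: int_lt1.
  by rewrite divr_gt0 // exprn_gt0.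
rewrite ltr_pdivrMr ?exprn_gt0 // mul1r ltr_eXn2l //; lra.
Qed.

Lemma cube8 (n : nat) (A : 'M[rat]_n.+1) (m : nat) :
  A ^+ 3 = 8%:M ->
  SA A m <-> int_mx ((8 : rat) ^+ (m %/ 3) *: A ^+ (m %% 3)).
Proof.
move=> h3; rewrite /SA {1}(divn_eq m 3) exprD mulnC exprM h3.
by rewrite -(rmorphXn (@scalar_mx rat n.+1)) /= -mulmxE mul_scalar_mx.
Qed.
Definition mx2 (a b c d : rat) : 'M[rat]_2 :=
  \matrix_(i < 2, j < 2)
    if (i : nat) == 0%N then (if (j : nat) == 0%N then a else b)
    else (if (j : nat) == 0%N then c else d).

Ltac ord2 i := case: i => [[|[|?]] ?] //=.

Lemma mx2_eta (A : 'M[rat]_2) : A = mx2 (A 0 0) (A 0 1) (A 1 0) (A 1 1).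
Proof.
apply/matrixP => i j; rewrite mxE; ord2 i; ord2 j; congr (A _ _); exact: val_inj.
Qed.

Lemma mx2_mul a b c d a' b' c' d' :
  mx2 a b c d * mx2 a' b' c' d' =
  mx2 (a * a' + b * c') (a * b' + b * d') (c * a' + d * c') (c * b' + d * d').
Proof.
apply/matrixP => i j; rewrite !mxE !big_ord_recr big_ord0 /= !mxE /= add0r.
ord2 i; ord2 j.
Qed.

Lemma mx2_scale k a b c d : k *: mx2 a b c d = mx2 (k * a) (k * b) (k * c) (k * d).
Proof. apply/matrixP => i j; rewrite !mxE; ord2 i; ord2 j. Qed.

Lemma mx2_1 : (1 : 'M[rat]_2) = mx2 1 0 0 1.
Proof. apply/matrixP => i j; rewrite !mxE; ord2 i; ord2 j. Qed.

Lemma mx2_scalar k : (k%:M : 'M[rat]_2) = mx2 k 0 0 k.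
Proof. apply/matrixP => i j; rewrite !mxE; ord2 i; ord2 j. Qed.

Lemma mx2_add a b c d a' b' c' d' :
  mx2 a b c d + mx2 a' b' c' d' = mx2 (a + a') (b + b') (c + c') (d + d').
Proof. apply/matrixP => i j; rewrite !mxE; ord2 i; ord2 j. Qed.

Lemma int_mx2 a b c d : int_mx (mx2 a b c d) <->
  [/\ a \is a Num.int, b \is a Num.int, c \is a Num.int & d \is a Num.int].
Proof.
split.
  move=> h; split; [move: (h 0 0)|move: (h 0 1)|move: (h 1 0)|move: (h 1 1)]; by rewrite mxE.
case=> ha hb hc hd i j; rewrite mxE; ord2 i; ord2 j.
Qed.

Definition mx3 (a b c d e f g h k : rat) : 'M[rat]_3 :=
  \matrix_(i < 3, j < 3)
    if (i : nat) == 0%N then (if (j : nat) == 0%N then a else if (j : nat) == 1%N then b else c)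
    else if (i : nat) == 1%N then (if (j : nat) == 0%N then d else if (j : nat) == 1%N then e else f)
    else (if (j : nat) == 0%N then g else if (j : nat) == 1%N then h else k).

Ltac ord3 i := case: i => [[|[|[|?]]] ?] //=.

Lemma mx3_mul a b c d e f g h k a' b' c' d' e' f' g' h' k' :
  mx3 a b c d e f g h k * mx3 a' b' c' d' e' f' g' h' k' =
  mx3 (a*a' + b*d' + c*g') (a*b' + b*e' + c*h') (a*c' + b*f' + c*k')
      (d*a' + e*d' + f*g') (d*b' + e*e' + f*h') (d*c' + e*f' + f*k')
      (g*a' + h*d' + k*g') (g*b' + h*e' + k*h') (g*c' + h*f' + k*k').
Proof.
apply/matrixP => i j; rewrite !mxE !big_ord_recr big_ord0 /= !mxE /= add0r.
ord3 i; ord3 j.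
Qed.

Lemma mx3_scale s a b c d e f g h k :
  s *: mx3 a b c d e f g h k = mx3 (s*a) (s*b) (s*c) (s*d) (s*e) (s*f) (s*g) (s*h) (s*k).
Proof. apply/matrixP => i j; rewrite !mxE; ord3 i; ord3 j. Qed.

Lemma mx3_1 : (1 : 'M[rat]_3) = mx3 1 0 0 0 1 0 0 0 1.
Proof. apply/matrixP => i j; rewrite !mxE; ord3 i; ord3 j. Qed.

Lemma mx3_scalar s : (s%:M : 'M[rat]_3) = mx3 s 0 0 0 s 0 0 0 s.
Proof. apply/matrixP => i j; rewrite !mxE; ord3 i; ord3 j. Qed.

Lemma int_mx3 a b c d e f g h k : int_mx (mx3 a b c d e f g h k) <->
  [/\ a \is a Num.int, b \is a Num.int, c \is a Num.int, d \is a Num.int &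
   [/\ e \is a Num.int, f \is a Num.int, g \is a Num.int, h \is a Num.int & k \is a Num.int]].
Proof.
split.
  move=> H; split; [move: (H 0 0)|move: (H 0 1)|move: (H 0 2)|move: (H 1 0)|split;
  [move: (H 1 1)|move: (H 1 2)|move: (H 2 0)|move: (H 2 1)|move: (H 2 2)]]; by rewrite mxE.
case=> ha hb hc hd [he hf hg hh hk] i j; rewrite mxE; ord3 i; ord3 j.
Qed.
Section SS.
Local Close Scope ring_scope.
Lemma S_struct (S : nat -> Prop) (a1 a2 : nat) :
  numerical_semigroup S -> multiplicity S 3 ->
  apery_elt S 3 1 a1 -> apery_elt S 3 2 a2 ->
  [/\ a1 %% 3 = 1, a2 %% 3 = 2, a2 <= a1.*2, a1 <= a2.*2 &
   forall n, S n <-> [\/ n %% 3 = 0, (n %% 3 = 1 /\ a1 <= n) | (n %% 3 = 2 /\ a2 <= n)]].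
Proof.

move=> [S0 Sadd _] [_ S3 _] [Sa1 ma1 mina1] [Sa2 ma2 mina2].
have m1 : a1 %% 3 = 1 by rewrite ma1.
have m2 : a2 %% 3 = 2 by rewrite ma2.
have S3k : forall a k, S a -> S (a + 3 * k).
  move=> a k Sa; elim: k => [|k IH]; first by rewrite muln0 addn0.
  by rewrite mulnS addnCA; apply: Sadd.
have h21 : a2 <= a1.*2.
  apply: mina2; first by rewrite -addnn; apply: Sadd.
  by rewrite /= -addnn -modnDm m1.
have h12 : a1 <= a2.*2.
  apply: mina1; first by rewrite -addnn; apply: Sadd.
  by rewrite /= -addnn -modnDm m2.
split=> // n; split.
- move=> Sn; have : n %% 3 < 3 by rewrite ltn_mod.
  case E: (n %% 3) => [|[|[|]]] // _; [by constructor 1 | constructor 2 | constructor 3].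
  + by split=> //; apply: mina1 => //; rewrite /= E.
  + by split=> //; apply: mina2 => //; rewrite /= E.
- case=> [h|[h1 h2]|[h1 h2]].
  + have -> : n = 0 + 3 * (n %/ 3) by have := divn_eq n 3; lia.
    exact: S3k.
  + have -> : n = a1 + 3 * ((n - a1) %/ 3).
      have := divn_eq n 3; have := divn_eq a1 3; lia.
    exact: S3k.
  + have -> : n = a2 + 3 * ((n - a2) %/ 3).
      have := divn_eq n 3; have := divn_eq a2 3; lia.
    exact: S3k.
Qed.
End SS.

Lemma int8 (q u v : nat) : ((8 : rat) ^+ q * (2 ^+ u / 2 ^+ v) \is a Num.int) = (v <= 3 * q + u)%N.
Proof.
by rewrite -pow2_int exprD exprM mulrA.
Qed.

Lemma int8' (q : nat) (x : rat) : x \is a Num.int -> (8 : rat) ^+ q * x \is a Num.int.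
Proof. by move=> hx; rewrite rpredM // rpredX // intr_int. Qed.

Lemma dim3 (a1 a2 : nat) : (a1 %% 3 = 1)%N -> (a2 %% 3 = 2)%N -> (a2 <= a1.*2)%N -> (a1 <= a2.*2)%N ->
  exists A : 'M[rat]_3, forall n, SA A n <->
    [\/ (n %% 3 = 0)%N, ((n %% 3 = 1)%N /\ (a1 <= n)%N) | ((n %% 3 = 2)%N /\ (a2 <= n)%N)].
Proof.
move=> m1 m2 h21 h12.
set P : rat := 2 ^+ a1; set Q : rat := 2 ^+ a2.
have P0 : P != 0 by rewrite expf_neq0.
have Q0 : Q != 0 by rewrite expf_neq0.
pose A := mx3 0 0 (2 / P) (2 * Q) 0 0 0 (2 * P / Q) 0.
have A2 : A ^+ 2 = mx3 0 (4 / Q) 0 0 0 (4 * Q / P) (4 * P) 0 0.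
  rewrite expr2 mx3_mul; congr mx3; field; rewrite ?P0 ?Q0 //.
have A3 : A ^+ 3 = 8%:M.
  rewrite exprS A2 mx3_mul mx3_scalar; congr mx3; field; rewrite ?P0 ?Q0 //.
exists A => n; rewrite cube8 //.
have : (n %% 3 < 3)%N by rewrite ltn_mod.
set q := (n %/ 3)%N.
have hn : n = (3 * q + n %% 3)%N by rewrite /q mulnC -divn_eq.
case E: (n %% 3)%N => [|[|[|]]] // _.
- rewrite expr0 mx3_1 mx3_scale int_mx3 !mulr1 !mulr0 rpred0.
  have h8 : (8:rat) ^+ q \is a Num.int by rewrite rpredX // intr_int.
  by rewrite h8; split=> // _; constructor 1.
- rewrite expr1 mx3_scale int_mx3.
  have -> : 2 / P = 2 ^+ 1 / 2 ^+ a1 by rewrite /P /Q ?exprD; field.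
  have -> : 2 * Q = 2 ^+ (a2 + 1) / 2 ^+ 0 by rewrite /P /Q ?exprD; field.
  have -> : 2 * P / Q = 2 ^+ (a1 + 1) / 2 ^+ a2 by rewrite /P /Q ?exprD; field.
  rewrite !int8 !mulr0 rpred0; split.
    by case=> _ _ h _ _; constructor 2; split=> //; lia.
  case=> [//|[_ h]|[//]]; (split; try split); try done; lia.
- rewrite A2 mx3_scale int_mx3.
  have -> : 4 / Q = 2 ^+ 2 / 2 ^+ a2 by rewrite /P /Q ?exprD; field.
  have -> : 4 * Q / P = 2 ^+ (a2 + 2) / 2 ^+ a1 by rewrite /P /Q ?exprD; field.
  have -> : 4 * P = 2 ^+ (a1 + 2) / 2 ^+ 0 by rewrite /P /Q ?exprD; field.
  rewrite !int8 !mulr0 rpred0; split.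
    by case=> _ h _ _ _; constructor 3; split=> //; lia.
  case=> [//|[//]|[_ h]]; (split; try split); try done; lia.
Qed.

Lemma dim2 (c : nat) :
  exists A : 'M[rat]_2, forall n, SA A n <->
    ((n %% 3 = 0)%N \/ ((n %% 3 != 0)%N /\ (c <= n)%N)).
Proof.
set P : rat := 2 ^+ c.
have P0 : P != 0 by rewrite expf_neq0.
pose A := mx2 0 (- (2 / P)) (2 * P) (-2).
have A2 : A ^+ 2 = mx2 (-4) (4 / P) (- (4 * P)) 0.
  rewrite expr2 mx2_mul; congr mx2; field; rewrite ?P0 //.
have A3 : A ^+ 3 = 8%:M.
  rewrite exprS A2 mx2_mul mx2_scalar; congr mx2; field; rewrite ?P0 //.
exists A => n; rewrite cube8 //.
have : (n %% 3 < 3)%N by rewrite ltn_mod.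
set q := (n %/ 3)%N.
have hn : n = (3 * q + n %% 3)%N by rewrite /q mulnC -divn_eq.
have h8 : (8:rat) ^+ q \is a Num.int by rewrite rpredX // intr_int.
case E: (n %% 3)%N => [|[|[|]]] // _.
- rewrite expr0 mx2_1 mx2_scale int_mx2 !mulr1 !mulr0 rpred0 h8.
  by split=> // _; left.
- rewrite expr1 mx2_scale int_mx2 !mulrN !rpredN.
  have -> : 2 / P = 2 ^+ 1 / 2 ^+ c by rewrite /P ?exprD; field.
  have -> : 2 * P = 2 ^+ (c + 1) / 2 ^+ 0 by rewrite /P ?exprD; field.
  have -> : 2 = 2 ^+ 1 / 2 ^+ 0 :> rat by field.
  rewrite !int8 !mulr0 rpred0; split.
    by case=> _ h _ _; right; split=> //; lia.
  case=> [//|[_ h]]; (split; try split); try done; lia.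
- rewrite A2 mx2_scale int_mx2 !mulrN !rpredN.
  have -> : 4 / P = 2 ^+ 2 / 2 ^+ c by rewrite /P ?exprD; field.
  have -> : 4 * P = 2 ^+ (c + 2) / 2 ^+ 0 by rewrite /P ?exprD; field.
  have -> : 4 = 2 ^+ 2 / 2 ^+ 0 :> rat by field.
  rewrite !int8 !mulr0 rpred0; split.
    by case=> _ h _ _; right; split=> //; lia.
  case=> [//|[_ h]]; (split; try split); try done; lia.
Qed.

Lemma intE (x : rat) : x \is a Num.int -> exists z : int, x = z%:~R.
Proof. by move/intrP. Qed.

Ltac zint := match goal with
  | |- is_true (@in_mem _ ?a _) =>
    change (is_true (a \is a Num.int));
    match a with
    | ?x + ?y => rewrite (@rpredD _ _ x y); zint
    | - ?x => rewrite (@rpredN _ _ x); zint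
    | ?x * ?y => rewrite (@rpredM _ _ x y); zint
    | ?x ^+ ?n => rewrite (@rpredX _ _ n x); zint
    | _ => try done
    end
  | _ => try done
  end.

Section Key2.
Variables a b c e : rat.
Let t := a + e.
Let d := a * e - b * c.
Let Pm k y := mx2 (k * a + y) (k * b) (k * c) (k * e + y).

Lemma Pm_mul k y k' y' : Pm k y * Pm k' y' = Pm (k * k' * t + k * y' + y * k') (y * y' - k * k' * d).
Proof. rewrite /Pm mx2_mul /t /d; congr mx2; ring. Qed.

Lemma Pm_A : mx2 a b c e = Pm 1 0.
Proof. rewrite /Pm; congr mx2; ring. Qed.

Lemma int_Pm k y : y \is a Num.int ->
  int_mx (Pm k y) <-> [/\ k * a \is a Num.int, k * b \is a Num.int, k * c \is a Num.int & k * e \is a Num.int].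
Proof. by move=> hy; rewrite int_mx2 !rpredDr. Qed.

Lemma key2 : SA (mx2 a b c e) 3 ->
  exists t : rat, t \is a Num.int /\ forall n, (n %% 3 != 0)%N ->
   (SA (mx2 a b c e) n <-> [/\ t ^+ n.-1 * a \is a Num.int, t ^+ n.-1 * b \is a Num.int,
      t ^+ n.-1 * c \is a Num.int & t ^+ n.-1 * e \is a Num.int]).
Proof.
rewrite /SA Pm_A.
set u := t ^+ 2 - d.
have A3 : Pm 1 0 ^+ 3 = Pm u (- (t * d)).
  by rewrite !exprS expr0 mulr1 !Pm_mul /u; congr Pm; ring.
rewrite A3 /Pm int_mx2 => -[h1 h2 h3 h4].
have hd : d \is a Num.int.
  have hD := rpredB (rpredM h1 h4) (rpredM h2 h3).
  have [D hDz] := intE hD.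
  apply: (@cubic_int d 0 (- D)); rewrite rmorphN /= -hDz mul0r addr0 /u /t /d.
  ring.
have [dz hdz] := intE hd.
have ht : t \is a Num.int.
  have hT := rpredD h1 h4.
  have [T hTz] := intE hT.
  apply: (@cubic_int t (- 3 * dz) (- T)); rewrite rmorphN /= -hTz rmorphM /= -hdz /u /t /d.
  ring.
have hv : t * d \is a Num.int by rewrite rpredM.
have hu : u \is a Num.int by rewrite rpredB ?rpredX.
have ua : u * a \is a Num.int by rewrite -[u * a](subrK (t * d)) rpredD.
have ub : u * b \is a Num.int by [].
have uc : u * c \is a Num.int by [].
have ue : u * e \is a Num.int by rewrite -[u * e](subrK (t * d)) rpredD.
have Q : forall j, (exists k y, [/\ k \is a Num.int, y \is a Num.int &
     Pm 1 0 ^+ (3 * j + 1)%N = Pm ((- t ^+ 3) ^+ j + u * k) y]) /\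
   (exists k y, [/\ k \is a Num.int, y \is a Num.int &
     Pm 1 0 ^+ (3 * j + 2)%N = Pm ((- t ^+ 3) ^+ j * t + u * k) y]).
  elim=> [|j [[k1 [y1 [hk1 hy1 E1]]] [k2 [y2 [hk2 hy2 E2]]]]].
    split; [exists 0, 0 | exists 0, (- d)]; split => //; rewrite ?rpredN //.
      by rewrite expr1 /Pm; congr mx2; ring.
    by rewrite expr2 Pm_mul /Pm; congr mx2; ring.
  have hw : (- t ^+ 3) ^+ j \is a Num.int by rewrite rpredX ?rpredN ?rpredX.
  set w := (- t ^+ 3) ^+ j in hw E1 E2 *.
  have -> : (- t ^+ 3) ^+ j.+1 = - t ^+ 3 * w by rewrite exprS.
  split.
    exists ((w + u * k1) * t + y1 + t * w - t * d * k1), (- (t * d) * y1 - u * (w + u * k1) * d).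
    split; first by zint.
      by zint.
    have -> : (3 * j.+1 + 1 = 3 + (3 * j + 1))%N by rewrite mulnS addnA.
    rewrite (exprD (Pm 1 0) 3 (3 * j + 1)) A3 E1 Pm_mul; congr (Pm _ _); rewrite /u; ring.
  exists ((w * t + u * k2) * t + y2 + t * (w * t) - t * d * k2), (- (t * d) * y2 - u * (w * t + u * k2) * d).
  split; first by zint.
    by zint.
  have -> : (3 * j.+1 + 2 = 3 + (3 * j + 2))%N by rewrite mulnS addnA.
  rewrite (exprD (Pm 1 0) 3 (3 * j + 2)) A3 E2 Pm_mul; congr (Pm _ _); rewrite /u; ring.
have H : forall s k x, k \is a Num.int -> u * x \is a Num.int ->
    ((s + u * k) * x \is a Num.int) = (s * x \is a Num.int).
  move=> s k x hk hx; rewrite mulrDl (_ : u * k * x = k * (u * x)); last by ring.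
  by rewrite rpredDr // rpredM.
have H2 : forall j m x, ((- t ^+ 3) ^+ j * t ^+ m * x \is a Num.int) = (t ^+ (3 * j + m) * x \is a Num.int).
  move=> j m x.
  rewrite (_ : (- t ^+ 3) ^+ j * t ^+ m * x = (-1) ^+ j * (t ^+ (3 * j + m) * x)); first by rewrite rpredMsign.
  by rewrite (exprNn (t ^+ 3)) exprD exprM; ring.
exists t; split=> // n hn.
have hr : (n %% 3 < 3)%N by rewrite ltn_mod.
have hnj : n = (3 * (n %/ 3) + n %% 3)%N by rewrite mulnC -divn_eq.
set j := (n %/ 3)%N in hnj *.
case: (Q j) => [[k1 [y1 [hk1 hy1 E1]]] [k2 [y2 [hk2 hy2 E2]]]].
move: hnj hn hr; case: (n %% 3)%N => [|[|[|]]] // hnj _ _.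
- have -> : n.-1 = (3 * j + 0)%N by rewrite {1}hnj addn1 addn0.
  rewrite hnj E1 int_Pm // !H // -(mulr1 ((- t ^+ 3) ^+ j)) -(expr0 t) !H2.
  by [].
- have -> : n.-1 = (3 * j + 1)%N by rewrite {1}hnj addn2 addn1.
  rewrite hnj E2 int_Pm // !H // -(expr1 t) !H2.
  by [].
Qed.
End Key2.

Lemma small_dim (S : nat -> Prop) (d : nat) : (d < 2)%N -> realizable_in_dim S d -> S 3%N -> S 1%N.
Proof.
case: d => [|[|//]] _ [A HA] S3; apply/HA.
  by move=> i; case: i.
move/HA: S3; rewrite /SA /int_mx => h3.
have E : forall n, A ^+ n = ((A 0 0) ^+ n)%:M.
  move=> n; rewrite {1}[A]mx11_scalar; by rewrite -(rmorphXn (@scalar_mx rat 1)).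
move: (h3 0 0); rewrite E expr1 mxE /= => hx.
have [z hz] := intrP hx.
have hA : A 0 0 \is a Num.int.
  apply: (@cubic_int _ 0 (- z)); by rewrite mul0r addr0 rmorphN /= -hz subrr.
by move=> i j; rewrite !ord1.
Qed.

Local Close Scope ring_scope.

Theorem theorem3p4 (S : nat -> Prop) (a1 a2 : nat) :
  numerical_semigroup S -> multiplicity S 3 ->
  apery_elt S 3 1 a1 -> apery_elt S 3 2 a2 ->
  ((`|a1 - a2| <= 2)%N -> dim_mat_eq S 2) /\
  ((2 < `|a1 - a2|)%N -> dim_mat_eq S 3).
Proof.
move=> NS MS A1 A2.
have [m1 m2 h21 h12 Sch] := S_struct NS MS A1 A2.
have [_ S3 S12] := MS.
have nS1 : ~ S 1 by apply: S12.
have small : forall d', (d' < 2)%N -> ~ realizable_in_dim S d'.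
  by move=> d' hd' R; apply: nS1; apply: (small_dim hd' R).
split=> hdist.
- split; last exact: small.
  have [A HA] := dim2 (minn a1 a2).
  exists A => n; rewrite HA Sch.
  have hm : (n %% 3 < 3)%N by rewrite ltn_mod.
  have hd2 : (a2 = a1 + 1 \/ a1 = a2 + 2)%N.
    move: hdist; rewrite distnC.
    have := divn_eq a1 3; have := divn_eq a2 3. lia.
  split.
    case=> [h|[h1 h2]|[h1 h2]]; [by left | right; split; lia..].
  case=> [h|[h1 h2]]; [by constructor 1|].
  have : (n %% 3 = 1 \/ n %% 3 = 2)%N by lia.
  case=> h3; [constructor 2 | constructor 3]; split => //;
    have := divn_eq n 3; have := divn_eq a1 3; have := divn_eq a2 3; lia.
- split.
    have [A HA] := dim3 m1 m2 h21 h12.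
    by exists A => n; rewrite HA Sch.
  move=> d'; rewrite ltnS leq_eqVlt => /orP [/eqP -> |]; last exact: small.
  case=> A HA.
  rewrite /realizable_in_dim in HA.
  have HA' : forall n, S n <-> SA (mx2 (A 0%R 0%R) (A 0%R 1%R) (A 1%R 0%R) (A 1%R 1%R)) n.
    by move=> n; rewrite -mx2_eta.
  have [t [ht Ht]] := key2 (proj1 (HA' 3%N) S3).
  have Sa1 : S a1 by have [] := A1.
  have Sa2 : S a2 by have [] := A2.
  have up : forall n k, (n %% 3 != 0)%N -> ((n + k) %% 3 != 0)%N -> S n -> S (n + k).
    move=> n k hn hn1 /HA' /(Ht n hn) [x1 x2 x3 x4]; apply/HA'; apply/(Ht _ hn1).
    move: x1 x2 x3 x4; case: n hn {hn1} => [//|n] _ /= x1 x2 x3 x4.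
    by rewrite ?addSn /= [(n + k)%N]addnC exprD -!mulrA; split; apply: rpredM => //; apply: rpredX.
  have s1 : S (a1 + 1) by apply: up => //; rewrite ?m1 // -modnDml m1.
  have s2 : S (a2 + 2) by apply: up => //; rewrite ?m2 // -modnDml m2.
  move/Sch: s1 => s1; move/Sch: s2 => s2.
  clear -s1 s2 hdist m1 m2.
  have : (a2 <= a1 + 1)%N by case: s1 => [|[]|[]]; lia.
  have : (a1 <= a2 + 2)%N by case: s2 => [|[]|[]]; lia.
  move: hdist; lia.
Qed.
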